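(* There exists a computable (2,1):1 structure $\mathcal{A}=(\omega,f)$ such that $\beta_{\mathcal{A}}$ is computable but $iso_{\mathcal{A}}$ is not computable (i.e. there is no partial computable function $\varphi$ with $\varphi(x)=iso_{\mathcal{A}}(x)$ for all $x\in\Lambda_{\mathcal{A}}$).
   Context: A (2,1):1 structure is a pair $\mathcal{A}=(A,f)$ with $A$ a countable set and $f:A\to A$ such that $|f^{-1}(a)|\in\{1,2\}$ for every $a\in A$; it is computable if $A$ is a computable set and $f$ is computable. The branching function is $\beta_{\mathcal{A}}(x)=|f^{-1}(x)|\in\{1,2\}$, and $\Lambda_{\mathcal{A}}=\{x:\beta_{\mathcal{A}}(x)=2\}$. For $x\in A$, $Tree_{\mathcal{A}}(x)$ is the directed graph with vertex set $\{a:\exists n\ge0\,(f^n(a)=x)\}$ and edges $(a,f(a))$ for $a$, $f(a)$ both in this set. The branch isomorphism function $iso_{\mathcal{A}}:\Lambda_{\mathcal{A}}\to\{0,1\}$ is defined, for $x\in\Lambda_{\mathcal{A}}$ with distinct pre-images $x_1,x_2$, by $iso_{\mathcal{A}}(x)=1$ if $Tree_{\mathcal{A}}(x_1)\cong Tree_{\mathcal{A}}(x_2)$ and $iso_{\mathcal{A}}(x)=0$ otherwise. *)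

(* Defs.v *)
From Stdlib Require Import Arith List.
Import ListNotations.

Inductive prf : Type :=
| PZero : prf
| PSucc : prf
| PProj : nat -> prf
| PComp : prf -> list prf -> prf
| PRec  : prf -> prf -> prf
| PMu   : prf -> prf.

Inductive eval : prf -> list nat -> nat -> Prop :=
| eval_zero : forall v, eval PZero v 0
| eval_succ : forall x v, eval PSucc (x :: v) (S x)
| eval_proj : forall i v, i < length v -> eval (PProj i) v (nth i v 0)
| eval_comp : forall f gs v ys y,
    Forall2 (fun g yi => eval g v yi) gs ys ->
    eval f ys y -> eval (PComp f gs) v y
| eval_rec0 : forall g h v y, eval g v y -> eval (PRec g h) (0 :: v) y
| eval_recS : forall g h n v z y,
    eval (PRec g h) (n :: v) z -> eval h (n :: z :: v) y ->
    eval (PRec g h) (S n :: v) y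
| eval_mu : forall f v n,
    eval f (n :: v) 0 ->
    (forall m, m < n -> exists k, eval f (m :: v) (S k)) ->
    eval (PMu f) v n.

Definition computable (g : nat -> nat) : Prop :=
  exists c : prf, forall x, eval c [x] (g x).

Definition preimage_card (f : nat -> nat) (x n : nat) : Prop :=
  exists l : list nat, NoDup l /\ length l = n /\ (forall a, In a l <-> f a = x).

Definition is_21_structure (f : nat -> nat) : Prop :=
  forall x, preimage_card f x 1 \/ preimage_card f x 2.

Definition in_Lambda (f : nat -> nat) (x : nat) : Prop := preimage_card f x 2.

Definition tree_vertex (f : nat -> nat) (x a : nat) : Prop :=
  exists n, Nat.iter n f a = x.

Definition tree_edge (f : nat -> nat) (x a b : nat) : Prop :=
  tree_vertex f x a /\ tree_vertex f x b /\ b = f a.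

Definition tree_iso (f : nat -> nat) (x1 x2 : nat) : Prop :=
  exists g : nat -> nat,
    (forall a, tree_vertex f x1 a -> tree_vertex f x2 (g a)) /\
    (forall a b, tree_vertex f x1 a -> tree_vertex f x1 b -> g a = g b -> a = b) /\
    (forall b, tree_vertex f x2 b -> exists a, tree_vertex f x1 a /\ g a = b) /\
    (forall a b, tree_vertex f x1 a -> tree_vertex f x1 b ->
       (tree_edge f x1 a b <-> tree_edge f x2 (g a) (g b))).

Definition iso_value (f : nat -> nat) (x v : nat) : Prop :=
  exists x1 x2, x1 <> x2 /\ f x1 = x /\ f x2 = x /\
    ((tree_iso f x1 x2 /\ v = 1) \/ (~ tree_iso f x1 x2 /\ v = 0)).

(* Main.v *)
Require Import Defs.
From Stdlib Require Import Arith List Lia Bool Classical.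
Import ListNotations.

Section PrfInd.
Variable P : prf -> Prop.
Hypothesis H0 : P PZero.
Hypothesis H1 : P PSucc.
Hypothesis H2 : forall i, P (PProj i).
Hypothesis H3 : forall f gs, P f -> Forall P gs -> P (PComp f gs).
Hypothesis H4 : forall g h, P g -> P h -> P (PRec g h).
Hypothesis H5 : forall f, P f -> P (PMu f).
Fixpoint prf_ind' (c : prf) : P c :=
  match c with
  | PZero => H0 | PSucc => H1 | PProj i => H2 i
  | PComp f gs => H3 f gs (prf_ind' f)
      ((fix F (l : list prf) : Forall P l :=
          match l with [] => Forall_nil _ | g :: l' => Forall_cons _ (prf_ind' g) (F l') end) gs)
  | PRec g h => H4 g h (prf_ind' g) (prf_ind' h)
  | PMu f => H5 f (prf_ind' f)
  end.
End PrfInd.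

Section EvalInd.
Variable P : prf -> list nat -> nat -> Prop.
Hypothesis E0 : forall v, P PZero v 0.
Hypothesis E1 : forall x v, P PSucc (x :: v) (S x).
Hypothesis E2 : forall i v, i < length v -> P (PProj i) v (nth i v 0).
Hypothesis E3 : forall f gs v ys y,
    Forall2 (fun g yi => eval g v yi /\ P g v yi) gs ys ->
    eval f ys y -> P f ys y -> P (PComp f gs) v y.
Hypothesis E4 : forall g h v y, eval g v y -> P g v y -> P (PRec g h) (0 :: v) y.
Hypothesis E5 : forall g h n v z y,
    eval (PRec g h) (n :: v) z -> P (PRec g h) (n :: v) z ->
    eval h (n :: z :: v) y -> P h (n :: z :: v) y ->
    P (PRec g h) (S n :: v) y.
Hypothesis E6 : forall f v n,
    eval f (n :: v) 0 -> P f (n :: v) 0 ->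
    (forall m, m < n -> exists k, eval f (m :: v) (S k) /\ P f (m :: v) (S k)) ->
    P (PMu f) v n.
Fixpoint eval_ind' c v y (H : eval c v y) {struct H} : P c v y.
Proof.
  destruct H.
  - apply E0.
  - apply E1.
  - apply E2; assumption.
  - apply E3 with ys; [| assumption | apply eval_ind'; assumption].
    clear - H eval_ind'. induction H; constructor; auto.
  - apply E4; [assumption| apply eval_ind'; assumption].
  - apply E5 with z; try assumption; apply eval_ind'; assumption.
  - apply E6; [assumption| apply eval_ind'; assumption|].
    intros m Hm. destruct (H0 m Hm) as [k Hk]. exists k. split; [assumption|].
    apply eval_ind'; assumption.
Qed.
End EvalInd.

Lemma eval_det : forall c v y, eval c v y -> forall y', eval c v y' -> y = y'.
Proof.
  apply (eval_ind' (fun c v y => forall y', eval c v y' -> y = y')).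
  - intros v y' H; inversion H; auto.
  - intros x v y' H; inversion H; auto.
  - intros i v _ y' H; inversion H; auto.
  - intros f gs v ys y HF Hf IH y' H. inversion H; subst.
    assert (ys = ys0).
    { clear - HF H2. revert ys0 H2. induction HF; intros ys0 H2; inversion H2; subst; auto.
      destruct H as [_ H]. f_equal; auto. }
    subst. auto.
  - intros g h v y _ IH y' H; inversion H; subst; auto.
  - intros g h n v z y _ IH1 _ IH2 y' H; inversion H; subst.
    apply IH1 in H5; subst. auto.
  - intros f v n Hf IHf Hlt y' H; inversion H; subst.
    destruct (Nat.lt_trichotomy n y') as [Hl|[Hl|Hl]]; auto.
    + match goal with Hx : forall m, m < y' -> _ |- _ => destruct (Hx _ Hl) as [k Hk] end. apply IHf in Hk. discriminate.
    + destruct (Hlt _ Hl) as [k [_ Hk]]. match goal with Hx : eval f (y' :: v) 0 |- _ => apply Hk in Hx end. discriminate.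
Qed.

(* denotation of mu-free programs *)
Fixpoint den (c : prf) (v : list nat) {struct c} : nat :=
  match c with
  | PZero => 0
  | PSucc => S (hd 0 v)
  | PProj i => nth i v 0
  | PComp f gs => den f ((fix F (l : list prf) := match l with [] => [] | g :: l' => den g v :: F l' end) gs)
  | PRec g h => match v with
                | [] => 0
                | n :: w => nat_rec (fun _ => nat) (den g w) (fun m r => den h (m :: r :: w)) n
                end
  | PMu _ => 0
  end.

Fixpoint wfb (k : nat) (c : prf) {struct c} : bool :=
  match c with
  | PZero => true
  | PSucc => 1 <=? k
  | PProj i => i <? k
  | PComp f gs => wfb (length gs) f && (fix F (l : list prf) := match l with [] => true | g :: l' => wfb k g && F l' end) gs
  | PRec g h => match k with 0 => false | S k' => wfb k' g && wfb (S (S k')) h end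
  | PMu _ => false
  end.

Lemma den_comp f gs v : den (PComp f gs) v = den f (map (fun g => den g v) gs).
Proof. simpl. f_equal. Qed.

Lemma den_rec0 g h w : den (PRec g h) (0 :: w) = den g w.
Proof. reflexivity. Qed.
Lemma den_recS g h n w : den (PRec g h) (S n :: w) = den h (n :: den (PRec g h) (n :: w) :: w).
Proof. reflexivity. Qed.

Lemma den_ok : forall c v, wfb (length v) c = true -> eval c v (den c v).
Proof.
  induction c using prf_ind'; intros v Hw; simpl in Hw.
  - constructor.
  - destruct v; simpl in Hw; [discriminate|]. constructor.
  - apply Nat.ltb_lt in Hw. constructor; auto.
  - rewrite den_comp. apply andb_prop in Hw as [Hf Hg].
    apply eval_comp with (map (fun g => den g v) gs).
    + clear Hf IHc. induction H; simpl; constructor.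
      * apply andb_prop in Hg as [Hg _]. apply H. exact Hg.
      * apply IHForall. apply andb_prop in Hg as [_ Hg]; auto.
    + apply IHc. rewrite length_map. auto.
  - destruct v as [|n w]; simpl in Hw; [discriminate|].
    apply andb_prop in Hw as [Hg Hh].
    induction n.
    + rewrite den_rec0. constructor. auto.
    + rewrite den_recS. apply eval_recS with (den (PRec c1 c2) (n :: w)); auto.
      
  - discriminate.
Qed.

Notation pj := PProj.
Notation ap := PComp.

Fixpoint cst (n : nat) : prf := match n with 0 => PZero | S m => ap PSucc [cst m] end.
Lemma den_cst n v : den (cst n) v = n.
Proof. induction n; simpl; auto. Qed.

Lemma den_proj i v : den (PProj i) v = nth i v 0. Proof. reflexivity. Qed.
Lemma den_succ v : den PSucc v = S (hd 0 v). Proof. reflexivity. Qed.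
Lemma den_zero v : den PZero v = 0. Proof. reflexivity. Qed.
Ltac ds := repeat progress (rewrite ?den_comp, ?den_proj, ?den_succ, ?den_zero; cbn [map nth hd]).

Definition addP := PRec (pj 0) (ap PSucc [pj 1]).
Lemma den_add a b : den addP [a; b] = a + b.
Proof. induction a; auto. unfold addP in *. rewrite den_recS. simpl in *. rewrite IHa. auto. Qed.

Definition mulP := PRec PZero (ap addP [pj 1; pj 2]).
Lemma den_mul a b : den mulP [a; b] = a * b.
Proof. induction a; auto. unfold mulP in *. rewrite den_recS, IHa. ds. rewrite den_add. lia. Qed.

Definition predP := PRec PZero (pj 0).
Lemma den_pred a : den predP [a] = pred a.
Proof. destruct a; auto. Qed.

Definition subr := PRec (pj 0) (ap predP [pj 1]).
Lemma den_subr b a : den subr [b; a] = a - b.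
Proof. induction b. simpl. lia. unfold subr in *. rewrite den_recS, IHb. ds. rewrite den_pred. lia. Qed.
Definition subP := ap subr [pj 1; pj 0].
Lemma den_sub a b : den subP [a; b] = a - b.
Proof. unfold subP. ds. apply den_subr. Qed.

Definition iszP := ap subP [cst 1; pj 0].
Lemma den_isz a : den iszP [a] = Nat.b2n (a =? 0).
Proof. unfold iszP. ds. rewrite den_cst, den_sub. destruct a; simpl; lia. Qed.
Definition nzP := ap iszP [ap iszP [pj 0]].
Lemma den_nz a : den nzP [a] = Nat.b2n (negb (a =? 0)).
Proof. unfold nzP. ds. rewrite !den_isz. destruct a; reflexivity. Qed.
Definition leP := ap iszP [subP].
Lemma den_le a b : den leP [a; b] = Nat.b2n (a <=? b).
Proof. unfold leP. ds. rewrite den_sub, den_isz.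
  destruct (a <=? b) eqn:E; [apply Nat.leb_le in E | apply Nat.leb_gt in E];
  destruct (a - b =? 0) eqn:E2; try reflexivity; apply Nat.eqb_eq in E2 || apply Nat.eqb_neq in E2; lia. Qed.
Definition ltP := ap leP [ap PSucc [pj 0]; pj 1].
Lemma den_lt a b : den ltP [a; b] = Nat.b2n (a <? b).
Proof. unfold ltP. ds. rewrite den_le. reflexivity. Qed.
Definition eqP := ap iszP [ap addP [subP; ap subP [pj 1; pj 0]]].
Lemma den_eq a b : den eqP [a; b] = Nat.b2n (a =? b).
Proof. unfold eqP. ds. rewrite !den_sub, den_add, den_isz.
  destruct (a =? b) eqn:E; [apply Nat.eqb_eq in E | apply Nat.eqb_neq in E];
  destruct (a - b + (b - a) =? 0) eqn:E2; try reflexivity; apply Nat.eqb_eq in E2 || apply Nat.eqb_neq in E2; lia. Qed.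
Lemma b2n_and a b : Nat.b2n a * Nat.b2n b = Nat.b2n (a && b).
Proof. destruct a, b; reflexivity. Qed.
(* if-then-else: cond is boolean nat *)
Definition iteP := ap addP [ap mulP [pj 0; pj 1]; ap mulP [ap iszP [pj 0]; pj 2]].
Lemma den_ite (b : bool) x y : den iteP [Nat.b2n b; x; y] = if b then x else y.
Proof. unfold iteP. ds. rewrite !den_mul, den_isz, den_add. destruct b; simpl; lia. Qed.

Fixpoint sumN (G : nat -> nat) (n : nat) : nat := match n with 0 => 0 | S m => sumN G m + G m end.
Lemma sumN_ext G G' n : (forall i, i < n -> G i = G' i) -> sumN G n = sumN G' n.
Proof. induction n; simpl; intros; auto. rewrite IHn, H; auto. Qed.

Definition projs (k off : nat) : list prf := map (fun j => pj (j + off)) (seq 0 k).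
Lemma projs_S k off : projs (S k) off = pj off :: projs k (S off).
Proof. unfold projs. simpl. f_equal. rewrite <- seq_shift, map_map. apply map_ext. intros. f_equal. lia. Qed.
Lemma map_projs_full k off u w : length u = off -> length w = k ->
  map (fun g => den g (u ++ w)) (projs k off) = w.
Proof.
  revert off u w. induction k; intros off u w Hu Hw.
  - destruct w; [reflexivity| discriminate].
  - destruct w as [|x w]; [discriminate|]. rewrite projs_S. simpl map. f_equal.
    + simpl. rewrite app_nth2 by lia. rewrite Hu, Nat.sub_diag. reflexivity.
    + replace (u ++ x :: w) with ((u ++ [x]) ++ w) by (rewrite <- app_assoc; reflexivity).
      apply IHk; auto. rewrite length_app; simpl; lia.
Qed.

Definition sumP (k : nat) (g : prf) : prf :=
  PRec PZero (ap addP [pj 1; ap g (pj 0 :: projs k 2)]).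
Lemma den_sum k g n w G : length w = k -> (forall i, den g (i :: w) = G i) ->
  den (sumP k g) (n :: w) = sumN G n.
Proof.
  intros Hl HG. induction n; auto. unfold sumP in *. rewrite den_recS, IHn. ds. rewrite den_add.
  simpl sumN. f_equal. rewrite <- HG. f_equal. f_equal.
  apply (map_projs_full k 2 [n; sumN G n] w); auto.
Qed.

Lemma wfb_projs k off n : off + k <= n -> forallb (wfb n) (projs k off) = true.
Proof. intros. apply forallb_forall. unfold projs. intros x Hx. apply in_map_iff in Hx as [j [<- Hj]].
  apply in_seq in Hj. simpl. apply Nat.ltb_lt. lia. Qed.

(* Cantor pairing *)
Definition T (s : nat) := sumN (fun i => i) (S s).
Lemma T_S s : T (S s) = T s + S s.
Proof. reflexivity. Qed.
Lemma T_ge s : s <= T s.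
Proof. induction s; unfold T; simpl; lia. Qed.
Lemma T_mono a b : a <= b -> T a <= T b.
Proof. induction 1; auto. rewrite T_S. lia. Qed.
Definition pr a b := T (a + b) + b.
Definition cw n := sumN (fun k => Nat.b2n (T (S k) <=? n)) n.
Definition p2 n := n - T (cw n).
Definition p1 n := cw n - p2 n.

Lemma sum_lt N s : sumN (fun k => Nat.b2n (k <? s)) N = Nat.min N s.
Proof. induction N; cbn [sumN]; [lia|]. rewrite IHN. destruct (N <? s) eqn:E;
  [apply Nat.ltb_lt in E | apply Nat.ltb_ge in E]; cbn [Nat.b2n]; lia. Qed.

Lemma cw_T s b : b <= s -> cw (T s + b) = s.
Proof.
  intros Hb. unfold cw. rewrite (sumN_ext _ (fun k => Nat.b2n (k <? s))).
  - rewrite sum_lt. pose proof (T_ge s). lia.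
  - intros k _. destruct (k <? s) eqn:E; [apply Nat.ltb_lt in E | apply Nat.ltb_ge in E].
    + f_equal. apply Nat.leb_le. pose proof (T_mono (S k) s). lia.
    + f_equal. apply Nat.leb_gt. pose proof (T_mono (S s) (S k)). rewrite T_S in H. lia.
Qed.
Lemma T_decomp n : exists s b, b <= s /\ n = T s + b.
Proof. induction n. exists 0, 0. auto.
  destruct IHn as [s [b [Hb ->]]]. destruct (Nat.eq_dec b s).
  - exists (S s), 0. rewrite T_S. lia.
  - exists s, (S b). lia. Qed.
Lemma p1_pr a b : p1 (pr a b) = a.
Proof. unfold p1, p2, pr. rewrite cw_T by lia. lia. Qed.
Lemma p2_pr a b : p2 (pr a b) = b.
Proof. unfold p2, pr. rewrite cw_T by lia. lia. Qed.
Lemma pr_p n : pr (p1 n) (p2 n) = n.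
Proof. destruct (T_decomp n) as [s [b [Hb ->]]]. unfold p1, p2, pr. rewrite cw_T by lia.
  replace (s - (T s + b - T s) + (T s + b - T s)) with s by lia. lia. Qed.
Lemma pr_inj a b c d : pr a b = pr c d -> a = c /\ b = d.
Proof. intros H. split; [rewrite <- (p1_pr a b), H, p1_pr | rewrite <- (p2_pr a b), H, p2_pr]; auto. Qed.
Lemma p2_le n : p2 n <= n.
Proof. unfold p2. lia. Qed.
Lemma p1_le n : p1 n <= n.
Proof. rewrite <- (pr_p n) at 2. unfold pr. pose proof (T_ge (p1 n + p2 n)). lia. Qed.

Definition TP := ap (sumP 0 (pj 0)) [ap PSucc [pj 0]].
Lemma den_T s : den TP [s] = T s.
Proof. unfold TP. ds. apply den_sum; auto. Qed.
Definition prP := ap addP [ap TP [addP]; pj 1].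
Lemma den_pr a b : den prP [a; b] = pr a b.
Proof. unfold prP. ds. rewrite den_add, den_T, den_add. reflexivity. Qed.
Definition cwP := ap (sumP 1 (ap leP [ap TP [ap PSucc [pj 0]]; pj 1])) [pj 0; pj 0].
Lemma den_cw n : den cwP [n] = cw n.
Proof. unfold cwP. ds. apply den_sum; auto. intros i. ds. rewrite den_T, den_le. reflexivity. Qed.
Definition p2P := ap subP [pj 0; ap TP [cwP]].
Lemma den_p2 n : den p2P [n] = p2 n.
Proof. unfold p2P. ds. rewrite den_cw, den_T, den_sub. reflexivity. Qed.
Definition p1P := ap subP [cwP; p2P].
Lemma den_p1 n : den p1P [n] = p1 n.
Proof. unfold p1P. ds. rewrite den_cw, den_p2, den_sub. reflexivity. Qed.

Lemma b2n_or a b : Nat.b2n (negb (Nat.b2n a + Nat.b2n b =? 0)) = Nat.b2n (a || b).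
Proof. destruct a, b; reflexivity. Qed.
Lemma b2n_isz b : Nat.b2n (Nat.b2n b =? 0) = Nat.b2n (negb b).
Proof. destruct b; reflexivity. Qed.
Lemma b2n_nz b : Nat.b2n (negb (Nat.b2n b =? 0)) = Nat.b2n b.
Proof. destruct b; reflexivity. Qed.

Definition andP := mulP.
Lemma den_and a b : den andP [Nat.b2n a; Nat.b2n b] = Nat.b2n (a && b).
Proof. unfold andP. rewrite den_mul. apply b2n_and. Qed.
Definition orP := ap nzP [addP].
Lemma den_or a b : den orP [Nat.b2n a; Nat.b2n b] = Nat.b2n (a || b).
Proof. unfold orP. ds. rewrite den_add, den_nz. apply b2n_or. Qed.
Definition notP := iszP.
Lemma den_not a : den notP [Nat.b2n a] = Nat.b2n (negb a).
Proof. unfold notP. rewrite den_isz. apply b2n_isz. Qed.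

Definition allN n (q : nat -> bool) := sumN (fun i => Nat.b2n (negb (q i))) n =? 0.
Definition exN n (q : nat -> bool) := negb (sumN (fun i => Nat.b2n (q i)) n =? 0).

Definition allP k g := ap iszP [sumP k (ap iszP [g])].
Lemma den_all k g n w q : length w = k -> (forall i, den g (i :: w) = Nat.b2n (q i)) ->
  den (allP k g) (n :: w) = Nat.b2n (allN n q).
Proof. intros Hl Hq. unfold allP. ds. rewrite (den_sum k _ n w (fun i => Nat.b2n (negb (q i)))); auto.
  rewrite den_isz. reflexivity. intros i. ds. rewrite Hq, den_isz. apply b2n_isz. Qed.
Definition exP k g := ap nzP [sumP k g].
Lemma den_ex k g n w q : length w = k -> (forall i, den g (i :: w) = Nat.b2n (q i)) ->
  den (exP k g) (n :: w) = Nat.b2n (exN n q).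
Proof. intros Hl Hq. unfold exP. ds. rewrite (den_sum k _ n w (fun i => Nat.b2n (q i))); auto.
  rewrite den_nz. reflexivity. Qed.

Definition hdN l := p1 (pred l).
Definition tlN l := p2 (pred l).
Definition consN h t := S (pr h t).
Definition iterTl k l := Nat.iter k tlN l.
Definition nthN i l := hdN (iterTl i l).
Definition lenN l := sumN (fun k => Nat.b2n (negb (iterTl k l =? 0))) l.

Definition hdP := ap p1P [predP].
Lemma den_hd l : den hdP [l] = hdN l.
Proof. unfold hdP. ds. rewrite den_pred, den_p1. reflexivity. Qed.
Definition tlP := ap p2P [predP].
Lemma den_tl l : den tlP [l] = tlN l.
Proof. unfold tlP. ds. rewrite den_pred, den_p2. reflexivity. Qed.
Definition consP := ap PSucc [prP].
Lemma den_cons h t : den consP [h; t] = consN h t.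
Proof. unfold consP. ds. rewrite den_pr. reflexivity. Qed.
Definition iterTlP := PRec (pj 0) (ap tlP [pj 1]).
Lemma den_iterTl k l : den iterTlP [k; l] = iterTl k l.
Proof. induction k; auto. unfold iterTlP in *. rewrite den_recS, IHk. ds. rewrite den_tl. reflexivity. Qed.
Definition nthP := ap hdP [iterTlP].
Lemma den_nth i l : den nthP [i; l] = nthN i l.
Proof. unfold nthP. ds. rewrite den_iterTl, den_hd. reflexivity. Qed.
Definition lenP := ap (sumP 1 (ap nzP [iterTlP])) [pj 0; pj 0].
Lemma den_len l : den lenP [l] = lenN l.
Proof. unfold lenP. ds. apply den_sum; auto. intros i. ds. rewrite den_iterTl, den_nz. reflexivity. Qed.

Definition jc j := p1 j.
Definition ja j := p1 (p2 j).
Definition jy j := p1 (p2 (p2 j)).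
Definition jh j := p2 (p2 (p2 j)).
Definition jcP := p1P.
Definition jaP := ap p1P [p2P].
Definition jyP := ap p1P [ap p2P [p2P]].
Definition jhP := ap p2P [ap p2P [p2P]].
Lemma den_jc j : den jcP [j] = jc j. Proof. apply den_p1. Qed.
Lemma den_ja j : den jaP [j] = ja j. Proof. unfold jaP. ds. rewrite den_p2, den_p1. reflexivity. Qed.
Lemma den_jy j : den jyP [j] = jy j. Proof. unfold jyP. ds. rewrite !den_p2, den_p1. reflexivity. Qed.
Lemma den_jh j : den jhP [j] = jh j. Proof. unfold jhP. ds. rewrite !den_p2. reflexivity. Qed.

Ltac dsa := repeat progress (ds; rewrite ?den_cst, ?den_add, ?den_mul, ?den_pred, ?den_sub,
  ?den_isz, ?den_nz, ?den_le, ?den_lt, ?den_eq, ?den_p1, ?den_p2, ?den_pr, ?den_hd, ?den_tl,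
  ?den_len, ?den_nth, ?den_cons, ?den_iterTl, ?den_jc, ?den_ja, ?den_jy, ?den_jh,
  ?den_and, ?b2n_and, ?den_or, ?den_not, ?b2n_isz, ?b2n_nz).

Definition jm j c a y := ((jc j =? c) && (ja j =? a)) && (jy j =? y).
Definition memN L c a y := exN (lenN L) (fun i => jm (nthN i L) c a y).
Definition memB := ap andP [ap andP [ap eqP [ap jcP [ap nthP [pj 0; pj 1]]; pj 2]; ap eqP [ap jaP [ap nthP [pj 0; pj 1]]; pj 3]];
                            ap eqP [ap jyP [ap nthP [pj 0; pj 1]]; pj 4]].
Definition memP := ap (exP 4 memB) [ap lenP [pj 0]; pj 0; pj 1; pj 2; pj 3].
Lemma den_mem L c a y : den memP [L; c; a; y] = Nat.b2n (memN L c a y).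
Proof. unfold memP. ds. rewrite den_len. apply den_ex; auto. intros i. unfold memB. dsa. reflexivity. Qed.

Definition jmz j c a := ((jc j =? c) && (ja j =? a)) && negb (jy j =? 0).
Definition memNZ L c a := exN (lenN L) (fun i => jmz (nthN i L) c a).
Definition memzB := ap andP [ap andP [ap eqP [ap jcP [ap nthP [pj 0; pj 1]]; pj 2]; ap eqP [ap jaP [ap nthP [pj 0; pj 1]]; pj 3]];
                            ap nzP [ap jyP [ap nthP [pj 0; pj 1]]]].
Definition memzP := ap (exP 3 memzB) [ap lenP [pj 0]; pj 0; pj 1; pj 2].
Lemma den_memz L c a : den memzP [L; c; a] = Nat.b2n (memNZ L c a).
Proof. unfold memzP. ds. rewrite den_len. apply den_ex; auto. intros i. unfold memzB. dsa. reflexivity. Qed.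

Definition okN (L j : nat) : bool :=
  let n := jc j in let a := ja j in let y := jy j in let z := jh j in
  let t := p1 n in let b := p2 n in
  ((t =? 0) && (y =? 0))
  || (((t =? 1) && negb (a =? 0)) && (y =? S (hdN a))
  || (((t =? 2) && (b <? lenN a)) && (y =? nthN b a)
  || ((((t =? 3) && (lenN (p2 b) =? lenN z)) && allN (lenN (p2 b)) (fun i => memN L (nthN i (p2 b)) a (nthN i z))) && memN L (p1 b) z y
  || (((t =? 4) && negb (a =? 0)) && (if hdN a =? 0 then memN L (p1 b) (tlN a) y
         else memN L n (consN (pred (hdN a)) (tlN a)) z && memN L (p2 b) (consN (pred (hdN a)) (consN z (tlN a))) y)
  || ((t =? 5) && memN L b (consN y a) 0) && allN y (fun m => memNZ L b (consN m a)))))).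

Definition Jn := ap p1P [pj 1].
Definition Ja := ap jaP [pj 1].
Definition Jy := ap jyP [pj 1].
Definition Jz := ap jhP [pj 1].
Definition Jt := ap p1P [Jn].
Definition Jb := ap p2P [Jn].
Definition lift2 (E : prf) := ap E [pj 1; pj 2].
Definition cp1 P E := ap P [E].
Definition cp2 P E1 E2 := ap P [E1; E2].

Definition case0 := cp2 andP (cp2 eqP Jt (cst 0)) (cp2 eqP Jy (cst 0)).
Definition case1 := cp2 andP (cp2 andP (cp2 eqP Jt (cst 1)) (cp1 nzP Ja)) (cp2 eqP Jy (cp1 PSucc (cp1 hdP Ja))).
Definition case2 := cp2 andP (cp2 andP (cp2 eqP Jt (cst 2)) (cp2 ltP Jb (cp1 lenP Ja))) (cp2 eqP Jy (cp2 nthP Jb Ja)).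
Definition body3 := ap memP [pj 1; cp2 nthP (pj 0) (cp1 p2P (lift2 Jb)); lift2 Ja; cp2 nthP (pj 0) (lift2 Jz)].
Definition case3 := cp2 andP (cp2 andP (cp2 andP (cp2 eqP Jt (cst 3)) (cp2 eqP (cp1 lenP (cp1 p2P Jb)) (cp1 lenP Jz)))
                       (ap (allP 2 body3) [cp1 lenP (cp1 p2P Jb); pj 0; pj 1]))
                   (ap memP [pj 0; cp1 p1P Jb; Jz; Jy]).
Definition case4 := cp2 andP (cp2 andP (cp2 eqP Jt (cst 4)) (cp1 nzP Ja))
   (ap iteP [cp1 iszP (cp1 hdP Ja); ap memP [pj 0; cp1 p1P Jb; cp1 tlP Ja; Jy];
             cp2 andP (ap memP [pj 0; Jn; cp2 consP (cp1 predP (cp1 hdP Ja)) (cp1 tlP Ja); Jz])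
                     (ap memP [pj 0; cp1 p2P Jb; cp2 consP (cp1 predP (cp1 hdP Ja)) (cp2 consP Jz (cp1 tlP Ja)); Jy])]).
Definition body5 := ap memzP [pj 1; lift2 Jb; cp2 consP (pj 0) (lift2 Ja)].
Definition case5 := cp2 andP (cp2 andP (cp2 eqP Jt (cst 5)) (ap memP [pj 0; Jb; cp2 consP Jy Ja; cst 0]))
                    (ap (allP 2 body5) [Jy; pj 0; pj 1]).
Definition okP := cp2 orP case0 (cp2 orP case1 (cp2 orP case2 (cp2 orP case3 (cp2 orP case4 case5)))).

Ltac dsb := unfold cp1, cp2, lift2, Jt, Jb, Jn, Ja, Jy, Jz; dsa; rewrite ?den_mem, ?den_memz; dsa.

Lemma den_ite' (b : bool) x y : den iteP [Nat.b2n b; x; y] = if b then x else y.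
Proof. apply den_ite. Qed.

Lemma den_okP L j : den okP [L; j] = Nat.b2n (okN L j).
Proof.
  unfold okP, cp2.
  assert (E0 : den case0 [L; j] = Nat.b2n ((p1 (jc j) =? 0) && (jy j =? 0))).
  { unfold case0. dsb. reflexivity. }
  assert (E1 : den case1 [L; j] = Nat.b2n (((p1 (jc j) =? 1) && negb (ja j =? 0)) && (jy j =? S (hdN (ja j))))).
  { unfold case1. dsb. reflexivity. }
  assert (E2 : den case2 [L; j] = Nat.b2n (((p1 (jc j) =? 2) && (p2 (jc j) <? lenN (ja j))) && (jy j =? nthN (p2 (jc j)) (ja j)))).
  { unfold case2. dsb. reflexivity. }
  assert (E3 : den case3 [L; j] = Nat.b2n ((((p1 (jc j) =? 3) && (lenN (p2 (p2 (jc j))) =? lenN (jh j))) && allN (lenN (p2 (p2 (jc j)))) (fun i => memN L (nthN i (p2 (p2 (jc j)))) (ja j) (nthN i (jh j)))) && memN L (p1 (p2 (jc j))) (jh j) (jy j))).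
  { unfold case3. dsb. rewrite (den_all 2 body3 _ [L; j] (fun i => memN L (nthN i (p2 (p2 (jc j)))) (ja j) (nthN i (jh j)))); auto.
    - dsb. reflexivity.
    - intros i. unfold body3. dsb. reflexivity. }
  assert (E4 : den case4 [L; j] = Nat.b2n (((p1 (jc j) =? 4) && negb (ja j =? 0)) && (if hdN (ja j) =? 0 then memN L (p1 (p2 (jc j))) (tlN (ja j)) (jy j)
         else memN L (jc j) (consN (pred (hdN (ja j))) (tlN (ja j))) (jh j) && memN L (p2 (p2 (jc j))) (consN (pred (hdN (ja j))) (consN (jh j) (tlN (ja j)))) (jy j)))).
  { unfold case4. dsb. rewrite den_ite'. destruct (hdN (ja j) =? 0); dsb; reflexivity. }
  assert (E5 : den case5 [L; j] = Nat.b2n (((p1 (jc j) =? 5) && memN L (p2 (jc j)) (consN (jy j) (ja j)) 0) && allN (jy j) (fun m => memNZ L (p2 (jc j)) (consN m (ja j))))).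
  { unfold case5. dsb. rewrite (den_all 2 body5 _ [L; j] (fun m => memNZ L (p2 (jc j)) (consN m (ja j)))); auto.
    - dsb. reflexivity.
    - intros i. unfold body5. dsb. reflexivity. }
  ds. rewrite E0, E1, E2, E3, E4, E5. dsa. reflexivity.
Qed.

Definition validN L := allN (lenN L) (fun i => okN L (nthN i L)).
Definition validP := ap (allP 1 (ap okP [pj 1; ap nthP [pj 0; pj 1]])) [ap lenP [pj 0]; pj 0].
Lemma den_valid L : den validP [L] = Nat.b2n (validN L).
Proof. unfold validP. ds. rewrite den_len. apply den_all; auto. intros i. ds. rewrite den_nth, den_okP. reflexivity. Qed.

Definition xN e := pr 1 e.
Definition chkN e L := validN L && memN L e (consN (xN e) 0) 1.
Definition chkP := ap andP [ap validP [pj 1]; ap memP [pj 1; pj 0; ap consP [ap prP [cst 1; pj 0]; cst 0]; cst 1]].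
Lemma den_chk e L : den chkP [e; L] = Nat.b2n (chkN e L).
Proof. unfold chkP. dsa. rewrite den_valid, den_mem. dsa. reflexivity. Qed.

Definition fN u :=
  let t := p1 u in let d := p2 u in
  if t =? 0 then u
  else if t =? 1 then pr 0 d
  else if t =? 2 then (if p2 d =? 0 then pr 1 (p1 d) else pr 2 (pr (p1 d) (pred (p2 d))))
  else if t =? 3 then (if p2 d =? 0 then pr 1 (p1 d) else pr 3 (pr (p1 d) (pred (p2 d))))
  else if t =? 4 then (if p2 (p2 d) =? 0 then (if chkN (p1 d) (p1 (p2 d)) then pr 2 (pr (p1 d) (p1 (p2 d))) else u)
                       else pr 4 (pr (p1 d) (pr (p1 (p2 d)) (pred (p2 (p2 d))))))
  else u.

Definition Ut := ap p1P [pj 0].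
Definition Ud := ap p2P [pj 0].
Definition ite3 c x y := ap iteP [c; x; y].
Definition is_t k := ap eqP [Ut; cst k].
Definition De := ap p1P [Ud].
Definition Dk := ap p2P [Ud].
Definition Dn := ap p1P [Dk].
Definition Dm := ap p2P [Dk].
Definition fP :=
  ite3 (is_t 0) (pj 0)
  (ite3 (is_t 1) (ap prP [cst 0; Ud])
  (ite3 (is_t 2) (ite3 (ap iszP [Dk]) (ap prP [cst 1; De]) (ap prP [cst 2; ap prP [De; ap predP [Dk]]]))
  (ite3 (is_t 3) (ite3 (ap iszP [Dk]) (ap prP [cst 1; De]) (ap prP [cst 3; ap prP [De; ap predP [Dk]]]))
  (ite3 (is_t 4) (ite3 (ap iszP [Dm]) (ite3 (ap chkP [De; Dn]) (ap prP [cst 2; ap prP [De; Dn]]) (pj 0))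
                       (ap prP [cst 4; ap prP [De; ap prP [Dn; ap predP [Dm]]]]))
   (pj 0))))).

Ltac dsc := unfold ite3, is_t, De, Dk, Dn, Dm, Ut, Ud; dsa; rewrite ?den_chk, ?den_ite'; dsa.

Lemma den_f u : den fP [u] = fN u.
Proof.
  unfold fP, fN. dsc.
  destruct (p1 u =? 0); dsc; [reflexivity|].
  destruct (p1 u =? 1); dsc; [reflexivity|].
  destruct (p1 u =? 2); dsc; [destruct (p2 (p2 u) =? 0); dsc; reflexivity|].
  destruct (p1 u =? 3); dsc; [destruct (p2 (p2 u) =? 0); dsc; reflexivity|].
  destruct (p1 u =? 4); dsc; [|reflexivity].
  destruct (p2 (p2 (p2 u)) =? 0); dsc; [|reflexivity].
  destruct (chkN (p1 (p2 u)) (p1 (p2 (p2 u)))); dsc; reflexivity.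
Qed.

Definition betaN u :=
  let t := p1 u in let d := p2 u in
  if t =? 0 then 2
  else if t =? 1 then 2
  else if t =? 2 then 1 + Nat.b2n (chkN (p1 d) (p2 d))
  else if t =? 3 then 1
  else if t =? 4 then (if p2 (p2 d) =? 0 then 1 + Nat.b2n (negb (chkN (p1 d) (p1 (p2 d)))) else 1)
  else 1.
Definition betaP :=
  ite3 (is_t 0) (cst 2)
  (ite3 (is_t 1) (cst 2)
  (ite3 (is_t 2) (ap PSucc [ap chkP [De; Dk]])
  (ite3 (is_t 3) (cst 1)
  (ite3 (is_t 4) (ite3 (ap iszP [Dm]) (ap PSucc [ap notP [ap chkP [De; Dn]]]) (cst 1))
   (cst 1))))).
Lemma den_beta u : den betaP [u] = betaN u.
Proof.
  unfold betaP, betaN. dsc.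
  destruct (p1 u =? 0); dsc; [reflexivity|].
  destruct (p1 u =? 1); dsc; [reflexivity|].
  destruct (p1 u =? 2); dsc; [reflexivity|].
  destruct (p1 u =? 3); dsc; [reflexivity|].
  destruct (p1 u =? 4); dsc; [|reflexivity].
  destruct (p2 (p2 (p2 u)) =? 0); dsc; reflexivity.
Qed.

Lemma wf_f : wfb 1 fP = true. Proof. vm_compute. reflexivity. Qed.
Lemma wf_beta : wfb 1 betaP = true. Proof. vm_compute. reflexivity. Qed.

Lemma sumN_zero (q : nat -> bool) n : sumN (fun i => Nat.b2n (q i)) n = 0 <-> forall i, i < n -> q i = false.
Proof.
  induction n; simpl. split; intros; [lia|auto].
  split.
  - intros H i Hi. assert (sumN (fun i => Nat.b2n (q i)) n = 0 /\ Nat.b2n (q n) = 0) as [H1 H2] by lia.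
    destruct (Nat.eq_dec i n). subst. destruct (q n); auto; discriminate.
    apply IHn; auto; lia.
  - intros H. rewrite (proj2 IHn) by (intros; apply H; lia). rewrite H by lia. reflexivity.
Qed.

Lemma exN_iff n q : exN n q = true <-> exists i, i < n /\ q i = true.
Proof. unfold exN. rewrite negb_true_iff, Nat.eqb_neq. induction n; simpl.
  - split; [intros H; lia| intros [i [Hi _]]; lia].
  - split.
    + intros H. destruct (q n) eqn:E. eauto.
      assert (sumN (fun i => Nat.b2n (q i)) n <> 0) by (simpl in H; lia).
      apply IHn in H0 as [i [Hi Hq]]. exists i. split; auto.
    + intros [i [Hi Hq]]. destruct (Nat.eq_dec i n). subst. rewrite Hq. simpl. lia.
      assert (sumN (fun i => Nat.b2n (q i)) n <> 0) by (apply IHn; exists i; split; auto; lia). lia.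
Qed.
Lemma allN_iff n q : allN n q = true <-> forall i, i < n -> q i = true.
Proof. unfold allN. rewrite Nat.eqb_eq, (sumN_zero (fun i => negb (q i))).
  split; intros H i Hi; specialize (H i Hi); destruct (q i); auto. Qed.

Fixpoint encl (l : list nat) : nat := match l with [] => 0 | x :: r => consN x (encl r) end.

Lemma hd_cons h t : hdN (consN h t) = h.
Proof. unfold hdN, consN. simpl. apply p1_pr. Qed.
Lemma tl_cons h t : tlN (consN h t) = t.
Proof. unfold tlN, consN. simpl. apply p2_pr. Qed.
Lemma p2_0 : p2 0 = 0. Proof. reflexivity. Qed.
Lemma tl_0 : tlN 0 = 0. Proof. reflexivity. Qed.
Lemma cons_neq0 h t : consN h t <> 0. Proof. discriminate. Qed.
Lemma iter_tl0 k : iterTl k 0 = 0.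
Proof. induction k; auto. unfold iterTl in *. simpl. rewrite IHk. reflexivity. Qed.
Lemma iterTl_encl k l : iterTl k (encl l) = encl (skipn k l).
Proof. revert l. induction k; intros l; auto. unfold iterTl in *. rewrite Nat.iter_succ_r.
  destruct l; simpl. rewrite tl_0. apply iter_tl0. rewrite tl_cons. apply IHk. Qed.
Lemma nthN_encl i l : nthN i (encl l) = nth i l 0.
Proof. unfold nthN. rewrite iterTl_encl. revert l. induction i; destruct l; simpl; auto.
  apply hd_cons. Qed.
Lemma encl_ge l : length l <= encl l.
Proof. induction l; simpl; auto. unfold consN, pr. lia. Qed.
Lemma encl_eq0 l : encl l = 0 <-> l = [].
Proof. destruct l; simpl; split; auto; discriminate. Qed.
Lemma lenN_encl l : lenN (encl l) = length l.
Proof. unfold lenN. rewrite (sumN_ext _ (fun k => Nat.b2n (k <? length l))).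
  - rewrite sum_lt. pose proof (encl_ge l). lia.
  - intros k _. rewrite iterTl_encl. f_equal. destruct (k <? length l) eqn:E.
    + apply Nat.ltb_lt in E. apply negb_true_iff, Nat.eqb_neq. rewrite encl_eq0.
      intros H. apply (f_equal (@length nat)) in H. rewrite length_skipn in H. simpl in H. lia.
    + apply Nat.ltb_ge in E. rewrite skipn_all2 by lia. reflexivity.
Qed.
Lemma encl_inj l1 l2 : encl l1 = encl l2 -> l1 = l2.
Proof. revert l2; induction l1; destruct l2; simpl; auto; try discriminate.
  intros H. unfold consN in H. injection H as H. apply pr_inj in H as [-> H]. f_equal; auto. Qed.
Lemma encl_surj n : exists l, encl l = n.
Proof. induction n as [n IH] using lt_wf_ind. destruct n. exists []; auto.
  destruct (IH (p2 n)) as [l Hl]. pose proof (p2_le n). lia.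
  exists (p1 n :: l). simpl. unfold consN. rewrite Hl, pr_p. reflexivity. Qed.

Definition encJ c a y h := pr c (pr a (pr y h)).
Lemma jc_enc c a y h : jc (encJ c a y h) = c. Proof. unfold jc, encJ. apply p1_pr. Qed.
Lemma ja_enc c a y h : ja (encJ c a y h) = a. Proof. unfold ja, encJ. rewrite p2_pr. apply p1_pr. Qed.
Lemma jy_enc c a y h : jy (encJ c a y h) = y. Proof. unfold jy, encJ. rewrite !p2_pr. apply p1_pr. Qed.
Lemma jh_enc c a y h : jh (encJ c a y h) = h. Proof. unfold jh, encJ. rewrite !p2_pr. reflexivity. Qed.

Definition memR Ls c a y := exists j, In j Ls /\ jc j = c /\ ja j = a /\ jy j = y.
Definition memZR Ls c a := exists j, In j Ls /\ jc j = c /\ ja j = a /\ jy j <> 0.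

Lemma memN_iff Ls c a y : memN (encl Ls) c a y = true <-> memR Ls c a y.
Proof. unfold memN, memR. rewrite exN_iff, lenN_encl. split.
  - intros [i [Hi H]]. rewrite nthN_encl in H. unfold jm in H.
    apply andb_true_iff in H as [H H3]. apply andb_true_iff in H as [H1 H2].
    apply Nat.eqb_eq in H1, H2, H3. exists (nth i Ls 0). split; auto. apply nth_In; auto.
  - intros [j [Hj [H1 [H2 H3]]]]. apply In_nth with (d := 0) in Hj as [i [Hi Hn]].
    exists i. split; auto. rewrite nthN_encl, Hn. unfold jm. rewrite H1, H2, H3, !Nat.eqb_refl. reflexivity.
Qed.
Lemma memNZ_iff Ls c a : memNZ (encl Ls) c a = true <-> memZR Ls c a.
Proof. unfold memNZ, memZR. rewrite exN_iff, lenN_encl. split.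
  - intros [i [Hi H]]. rewrite nthN_encl in H. unfold jmz in H.
    apply andb_true_iff in H as [H H3]. apply andb_true_iff in H as [H1 H2].
    apply Nat.eqb_eq in H1, H2. apply negb_true_iff, Nat.eqb_neq in H3. exists (nth i Ls 0). split; auto. apply nth_In; auto.
  - intros [j [Hj [H1 [H2 H3]]]]. apply In_nth with (d := 0) in Hj as [i [Hi Hn]].
    exists i. split; auto. rewrite nthN_encl, Hn. unfold jmz. rewrite H1, H2, !Nat.eqb_refl.
    apply Nat.eqb_neq in H3. rewrite H3. reflexivity.
Qed.
Lemma validN_iff Ls : validN (encl Ls) = true <-> forall j, In j Ls -> okN (encl Ls) j = true.
Proof. unfold validN. rewrite allN_iff, lenN_encl. split.
  - intros H j Hj. apply In_nth with (d := 0) in Hj as [i [Hi Hn]]. rewrite <- Hn, <- nthN_encl. auto.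
  - intros H i Hi. rewrite nthN_encl. apply H, nth_In; auto. Qed.

Fixpoint encP (c : prf) : nat :=
  match c with
  | PZero => pr 0 0 | PSucc => pr 1 0 | PProj i => pr 2 i
  | PComp f gs => pr 3 (pr (encP f) (encl ((fix F l := match l with [] => [] | g :: l' => encP g :: F l' end) gs)))
  | PRec g h => pr 4 (pr (encP g) (encP h))
  | PMu f => pr 5 (encP f)
  end.
Lemma encP_comp f gs : encP (PComp f gs) = pr 3 (pr (encP f) (encl (map encP gs))).
Proof. simpl. do 3 f_equal. Qed.

Ltac okred Ok := unfold okN in Ok; rewrite ?p1_pr, ?p2_pr in Ok; cbn [Nat.eqb andb orb Nat.pred] in Ok;
  rewrite ?orb_false_r in Ok.

Lemma forall2_nth {A B} (R : A -> B -> Prop) l1 l2 d1 d2 : length l1 = length l2 ->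
  (forall i, i < length l1 -> R (nth i l1 d1) (nth i l2 d2)) -> Forall2 R l1 l2.
Proof. revert l2; induction l1; destruct l2; simpl; intros; try discriminate; constructor.
  apply (H0 0); lia. apply IHl1; auto. intros i Hi. apply (H0 (S i)); lia. Qed.

Lemma sound Ls : validN (encl Ls) = true -> forall c v y, memR Ls (encP c) (encl v) y -> eval c v y.
Proof.
  intros HV. rewrite validN_iff in HV.
  induction c using prf_ind'; intros v y [j [Hj [Hc [Ha Hy]]]]; pose proof (HV j Hj) as Ok;
    unfold okN in Ok; rewrite Hc, Ha, Hy in Ok; try rewrite encP_comp in Ok; simpl encP in Ok.
  - okred Ok. apply Nat.eqb_eq in Ok. subst. rewrite Ok. constructor.
  - okred Ok. apply andb_true_iff in Ok as [O1 O2]. destruct v as [|x w]; [simpl in O1; discriminate|].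
    simpl encl in O2. rewrite hd_cons in O2. apply Nat.eqb_eq in O2. rewrite O2. constructor.
  - okred Ok. apply andb_true_iff in Ok as [O1 O2]. rewrite lenN_encl in O1. rewrite nthN_encl in O2.
    apply Nat.ltb_lt in O1. apply Nat.eqb_eq in O2. rewrite O2. constructor. auto.
  - okred Ok. destruct (encl_surj (jh j)) as [ys Hys]. rewrite <- Hys in Ok.
    rewrite ?p1_pr, !lenN_encl, length_map in Ok.
    apply andb_true_iff in Ok as [Ok O3]; apply andb_true_iff in Ok as [O1 O2].
    apply Nat.eqb_eq in O1. rewrite allN_iff in O2. rewrite memN_iff in O3.
    apply eval_comp with ys; [| apply IHc; exact O3].
    apply forall2_nth with (d1 := PZero) (d2 := 0); auto. intros i Hi. specialize (O2 i Hi).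
    rewrite !nthN_encl, memN_iff in O2. rewrite Forall_forall in H. apply H; [apply nth_In; auto|].
    rewrite (nth_indep _ 0 (encP PZero)) in O2 by (rewrite length_map; auto). rewrite map_nth in O2. exact O2.
  - assert (Hm : memR Ls (encP (PRec c1 c2)) (encl v) y) by (exists j; auto).
    clear j Hj Hc Ha Hy Ok. revert y Hm. destruct v as [|n w].
    { intros y [j [Hj [Hc [Ha Hy]]]]. pose proof (HV j Hj) as Ok. unfold okN in Ok.
      rewrite Hc, Ha, Hy in Ok. simpl encP in Ok. cbn [encl] in Ok. okred Ok. discriminate. }
    induction n; intros y [j [Hj [Hc [Ha Hy]]]]; pose proof (HV j Hj) as Ok; unfold okN in Ok;
      rewrite Hc, Ha, Hy in Ok; simpl encP in Ok; cbn [encl] in Ok; rewrite ?hd_cons, ?tl_cons in Ok; okred Ok.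
    + apply andb_true_iff in Ok as [_ O]. rewrite p1_pr in O. change (encl w) with (encl w) in O.
      rewrite memN_iff in O. constructor. apply IHc1. exact O.
    + apply andb_true_iff in Ok as [_ O]. apply andb_true_iff in O as [O1 O2].
      rewrite ?p2_pr in O2. change (consN n (encl w)) with (encl (n :: w)) in O1.
      change (consN n (consN (jh j) (encl w))) with (encl (n :: jh j :: w)) in O2.
      rewrite memN_iff in O1, O2. apply eval_recS with (jh j).
      * apply IHn. exact O1.
      * apply IHc2. exact O2.
  - okred Ok. apply andb_true_iff in Ok as [O1 O2].
    change (consN y (encl v)) with (encl (y :: v)) in O1. rewrite memN_iff in O1. rewrite allN_iff in O2.
    constructor; [apply IHc; exact O1|].
    intros m Hm. specialize (O2 m Hm). change (consN m (encl v)) with (encl (m :: v)) in O2.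
    rewrite memNZ_iff in O2. destruct O2 as [j' [Hj' [H1 [H2 H3]]]].
    destruct (jy j') as [|k] eqn:E; [contradiction|]. exists k. apply IHc. exists j'. auto.
Qed.

Lemma okN_mono L L' j : (forall c a y, memN L c a y = true -> memN L' c a y = true) ->
  (forall c a, memNZ L c a = true -> memNZ L' c a = true) -> okN L j = true -> okN L' j = true.
Proof.
  intros Hm Hz. unfold okN. cbv zeta. destruct (hdN (ja j) =? 0);
  rewrite ?orb_true_iff, ?andb_true_iff, ?allN_iff; intros H;
  (destruct H as [H|[H|[H|[H|[H|H]]]]];
   [left|right;left|right;right;left|right;right;right;left|right;right;right;right;left|right;right;right;right;right]);
  repeat match goal with H : _ /\ _ |- _ => destruct H end; repeat split; auto.
Qed.

Lemma memR_incl Ls Ls' c a y : incl Ls Ls' -> memR Ls c a y -> memR Ls' c a y.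
Proof. intros H [j [Hj Hr]]. exists j. auto. Qed.
Lemma memZR_incl Ls Ls' c a : incl Ls Ls' -> memZR Ls c a -> memZR Ls' c a.
Proof. intros H [j [Hj Hr]]. exists j. auto. Qed.
Lemma okN_incl Ls Ls' j : incl Ls Ls' -> okN (encl Ls) j = true -> okN (encl Ls') j = true.
Proof. intros H. apply okN_mono.
  - intros c a y. rewrite !memN_iff. apply memR_incl; auto.
  - intros c a. rewrite !memNZ_iff. apply memZR_incl; auto. Qed.

Definition validR Ls := validN (encl Ls) = true.
Lemma valid_app Ls1 Ls2 : validR Ls1 -> validR Ls2 -> validR (Ls1 ++ Ls2).
Proof. unfold validR. rewrite !validN_iff. intros H1 H2 j Hj. apply in_app_or in Hj as [Hj|Hj].
  - apply okN_incl with Ls1; auto. intros x Hx; apply in_or_app; auto.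
  - apply okN_incl with Ls2; auto. intros x Hx; apply in_or_app; auto. Qed.
Lemma valid_cons J Ls : validR Ls -> okN (encl (J :: Ls)) J = true -> validR (J :: Ls).
Proof. unfold validR. rewrite !validN_iff. intros H1 H2 j [<-|Hj]; auto.
  apply okN_incl with Ls; auto. intros x Hx; right; auto. Qed.
Lemma valid_nil : validR [].
Proof. reflexivity. Qed.
Lemma memR_head c a y h Ls : memR (encJ c a y h :: Ls) c a y.
Proof. exists (encJ c a y h). rewrite jc_enc, ja_enc, jy_enc. simpl. auto. Qed.

Lemma combine_F2 (gs : list prf) v ys :
  Forall2 (fun g yi => exists Ls, validR Ls /\ memR Ls (encP g) (encl v) yi) gs ys ->
  exists Ls, validR Ls /\ Forall2 (fun g yi => memR Ls (encP g) (encl v) yi) gs ys.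
Proof.
  induction 1. exists []. split; [apply valid_nil| constructor].
  destruct H as [L1 [V1 M1]]. destruct IHForall2 as [L2 [V2 M2]].
  exists (L1 ++ L2). split. apply valid_app; auto. constructor.
  - apply memR_incl with L1; auto. intros z Hz; apply in_or_app; auto.
  - eapply Forall2_impl; [|exact M2]. intros. apply memR_incl with L2; auto. intros z Hz; apply in_or_app; auto.
Qed.

Lemma combine_mu f v n :
  (forall m, m < n -> exists k, exists Ls, validR Ls /\ memR Ls (encP f) (encl (m :: v)) (S k)) ->
  exists Ls, validR Ls /\ forall m, m < n -> exists k, memR Ls (encP f) (encl (m :: v)) (S k).
Proof.
  induction n; intros H. exists []. split; [apply valid_nil| intros; lia].
  destruct IHn as [L1 [V1 M1]]. intros m Hm; apply H; lia.
  destruct (H n (Nat.lt_succ_diag_r n)) as [k [L2 [V2 M2]]].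
  exists (L1 ++ L2). split. apply valid_app; auto.
  intros m Hm. destruct (Nat.eq_dec m n).
  - subst. exists k. apply memR_incl with L2; auto. intros z Hz; apply in_or_app; auto.
  - destruct (M1 m ltac:(lia)) as [k' Hk']. exists k'. apply memR_incl with L1; auto. intros z Hz; apply in_or_app; auto.
Qed.

Lemma Forall2_nth_my {A B} (R : A -> B -> Prop) l1 l2 d1 d2 i : Forall2 R l1 l2 -> i < length l1 ->
  R (nth i l1 d1) (nth i l2 d2).
Proof. intros H. revert i. induction H; simpl; intros i Hi. lia. destruct i; auto. apply IHForall2. lia. Qed.

Lemma consN_eqb0 h t : (consN h t =? 0) = false.
Proof. reflexivity. Qed.

Ltac okgoal := unfold okN; rewrite ?jc_enc, ?ja_enc, ?jy_enc, ?jh_enc; try rewrite encP_comp; cbn [encP];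
  rewrite ?p1_pr, ?p2_pr; cbn [Nat.eqb andb orb Nat.pred]; rewrite ?orb_false_r.

Lemma complete : forall c v y, eval c v y -> exists Ls, validR Ls /\ memR Ls (encP c) (encl v) y.
Proof.
  apply (eval_ind' (fun c v y => exists Ls, validR Ls /\ memR Ls (encP c) (encl v) y)).
  - intros v. exists [encJ (encP PZero) (encl v) 0 0]. split; [|apply memR_head].
    apply valid_cons; [apply valid_nil|]. okgoal. reflexivity.
  - intros x v. exists [encJ (encP PSucc) (encl (x :: v)) (S x) 0]. split; [|apply memR_head].
    apply valid_cons; [apply valid_nil|]. okgoal. cbn [encl]. rewrite hd_cons, Nat.eqb_refl. reflexivity.
  - intros i v Hi. exists [encJ (encP (PProj i)) (encl v) (nth i v 0) 0]. split; [|apply memR_head].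
    apply valid_cons; [apply valid_nil|]. okgoal. rewrite lenN_encl, nthN_encl, Nat.eqb_refl.
    apply andb_true_iff; split; auto. apply Nat.ltb_lt; auto.
  - intros f gs v ys y HF Hf [Lf [Vf Mf]].
    assert (HF' : Forall2 (fun g yi => exists Ls, validR Ls /\ memR Ls (encP g) (encl v) yi) gs ys)
      by (eapply Forall2_impl; [|exact HF]; intros a b [_ H]; exact H).
    apply combine_F2 in HF' as [Lg [Vg Mg]].
    assert (Hlen : length gs = length ys) by (eapply Forall2_length; eauto).
    set (J := encJ (encP (PComp f gs)) (encl v) y (encl ys)).
    exists (J :: Lg ++ Lf). split; [|apply memR_head].
    apply valid_cons; [apply valid_app; auto|]. unfold J. okgoal.
    rewrite !lenN_encl, length_map, Hlen, Nat.eqb_refl. cbn [andb].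
    apply andb_true_iff; split.
    + apply allN_iff. intros i Hi. rewrite !nthN_encl, memN_iff.
      rewrite (nth_indep _ 0 (encP PZero)) by (rewrite length_map; lia). rewrite map_nth.
      apply memR_incl with Lg. intros z Hz; right; apply in_or_app; auto.
      apply (Forall2_nth_my (fun g yi => memR Lg (encP g) (encl v) yi) gs ys PZero 0 i Mg). lia.
    + rewrite memN_iff, p1_pr. apply memR_incl with Lf; auto. intros z Hz; right; apply in_or_app; auto.
  - intros g h v y _ [Lg [Vg Mg]].
    exists (encJ (encP (PRec g h)) (encl (0 :: v)) y 0 :: Lg). split; [|apply memR_head].
    apply valid_cons; auto. okgoal. change (encl (0 :: v)) with (consN 0 (encl v)).
    rewrite hd_cons, tl_cons, consN_eqb0, p1_pr. cbn [Nat.eqb negb andb].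
    rewrite memN_iff. apply memR_incl with Lg; auto. intros z Hz; right; auto.
  - intros g h n v z y _ [L1 [V1 M1]] _ [L2 [V2 M2]].
    exists (encJ (encP (PRec g h)) (encl (S n :: v)) y z :: L1 ++ L2). split; [|apply memR_head].
    apply valid_cons; [apply valid_app; auto|]. okgoal. change (encl (S n :: v)) with (consN (S n) (encl v)).
    rewrite hd_cons, tl_cons, consN_eqb0. cbn [Nat.eqb negb andb Nat.pred].
    change (consN n (encl v)) with (encl (n :: v)). change (consN n (consN z (encl v))) with (encl (n :: z :: v)).
    apply andb_true_iff; split; rewrite memN_iff.
    + apply memR_incl with L1; auto. intros x Hx; right; apply in_or_app; auto.
    + apply memR_incl with L2; auto. intros x Hx; right; apply in_or_app; auto.
  - intros f v n _ [L0 [V0 M0]] Hlt.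
    destruct (combine_mu f v n) as [Lm [Vm Mm]].
    { intros m Hm. destruct (Hlt m Hm) as [k [_ H]]. exists k. exact H. }
    exists (encJ (encP (PMu f)) (encl v) n 0 :: L0 ++ Lm). split; [|apply memR_head].
    apply valid_cons; [apply valid_app; auto|]. okgoal.
    change (consN n (encl v)) with (encl (n :: v)).
    apply andb_true_iff; split.
    + rewrite memN_iff. apply memR_incl with L0; auto. intros x Hx; right; apply in_or_app; auto.
    + apply allN_iff. intros m Hm. change (consN m (encl v)) with (encl (m :: v)).
      rewrite memNZ_iff. destruct (Mm m Hm) as [k [j [Hj [H1 [H2 H3]]]]].
      exists j. repeat split; auto. right; apply in_or_app; auto. lia.
Qed.

Definition yN e := pr 0 e.
Definition aN e k := pr 2 (pr e k).
Definition bN e k := pr 3 (pr e k).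
Definition cN e n k := pr 4 (pr e (pr n k)).

Ltac fcomp := unfold fN; rewrite ?p1_pr, ?p2_pr; cbn [Nat.eqb Nat.pred]; rewrite ?p1_pr, ?p2_pr; cbn [Nat.eqb Nat.pred].

Lemma f_y e : fN (yN e) = yN e. Proof. unfold yN. fcomp. reflexivity. Qed.
Lemma f_x e : fN (xN e) = yN e. Proof. unfold xN. fcomp. reflexivity. Qed.
Lemma f_a0 e : fN (aN e 0) = xN e. Proof. unfold aN. fcomp. reflexivity. Qed.
Lemma f_aS e k : fN (aN e (S k)) = aN e k. Proof. unfold aN. fcomp. reflexivity. Qed.
Lemma f_b0 e : fN (bN e 0) = xN e. Proof. unfold bN. fcomp. reflexivity. Qed.
Lemma f_bS e k : fN (bN e (S k)) = bN e k. Proof. unfold bN. fcomp. reflexivity. Qed.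
Lemma f_c0 e n : fN (cN e n 0) = if chkN e n then aN e n else cN e n 0.
Proof. unfold cN. fcomp. reflexivity. Qed.
Lemma f_cS e n k : fN (cN e n (S k)) = cN e n k. Proof. unfold cN. fcomp. reflexivity. Qed.
Lemma f_junk u : 5 <= p1 u -> fN u = u.
Proof. intros H. unfold fN. destruct (p1 u) as [|[|[|[|[|t]]]]]; try lia. reflexivity. Qed.

Lemma node_cases u : (exists e, u = yN e) \/ (exists e, u = xN e) \/ (exists e k, u = aN e k) \/
  (exists e k, u = bN e k) \/ (exists e n k, u = cN e n k) \/ 5 <= p1 u.
Proof.
  rewrite <- (pr_p u). rewrite <- (pr_p (p2 u)). rewrite <- (pr_p (p2 (p2 u))).
  set (t := p1 u). set (e := p1 (p2 u)). set (n := p1 (p2 (p2 u))). set (k := p2 (p2 (p2 u))).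
  rewrite p1_pr.
  destruct t as [|[|[|[|[|t]]]]].
  - left. eexists. reflexivity.
  - right; left. eexists. reflexivity.
  - right; right; left. do 2 eexists. reflexivity.
  - right; right; right; left. do 2 eexists. reflexivity.
  - right; right; right; right; left. do 3 eexists. reflexivity.
  - right; right; right; right; right. lia.
Qed.

Ltac prinj := repeat match goal with
  | H : pr _ _ = pr _ _ |- _ => apply pr_inj in H as [? ?]
  end; subst; rewrite ?p1_pr in *; try discriminate; try lia.

Ltac junk_tac := match goal with H : 5 <= p1 ?u |- _ =>
   match goal with H' : fN ?a = ?v |- _ => rewrite f_junk in H' by exact H; subst; rewrite p1_pr in H; lia end end.

Lemma f_inv a u : fN a = u ->
  (exists e, a = yN e /\ u = yN e) \/ (exists e, a = xN e /\ u = yN e) \/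
  (exists e, a = aN e 0 /\ u = xN e) \/ (exists e k, a = aN e (S k) /\ u = aN e k) \/
  (exists e, a = bN e 0 /\ u = xN e) \/ (exists e k, a = bN e (S k) /\ u = bN e k) \/
  (exists e n, a = cN e n 0 /\ chkN e n = true /\ u = aN e n) \/
  (exists e n, a = cN e n 0 /\ chkN e n = false /\ u = cN e n 0) \/
  (exists e n k, a = cN e n (S k) /\ u = cN e n k) \/
  (5 <= p1 a /\ u = a).
Proof.
  intros H. destruct (node_cases a) as [[e ->]|[[e ->]|[[e [k ->]]|[[e [k ->]]|[[e [n [k ->]]]|J]]]]].
  - left. rewrite f_y in H. eauto.
  - right; left. rewrite f_x in H. eauto.
  - destruct k. right; right; left. rewrite f_a0 in H; eauto.
    right; right; right; left. rewrite f_aS in H; eauto.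
  - destruct k. do 4 right; left. rewrite f_b0 in H; eauto.
    do 5 right; left. rewrite f_bS in H; eauto.
  - destruct k.
    + rewrite f_c0 in H. destruct (chkN e n) eqn:E.
      * do 6 right; left. eauto.
      * do 7 right; left. eauto.
    + do 8 right; left. rewrite f_cS in H. eauto.
  - do 9 right. rewrite f_junk in H; auto.
Qed.

Lemma pc_intro f x l : NoDup l -> (forall a, In a l <-> f a = x) -> preimage_card f x (length l).
Proof. intros. exists l. auto. Qed.

Ltac splitall := repeat match goal with
  | H : _ \/ _ |- _ => destruct H
  | H : exists _, _ |- _ => destruct H
  | H : _ /\ _ |- _ => destruct H
  end.
Ltac unf := unfold yN, xN, aN, bN, cN in *.

Ltac bcomp := unfold betaN, yN, xN, aN, bN, cN; rewrite ?p1_pr, ?p2_pr; cbn [Nat.eqb Nat.pred]; rewrite ?p1_pr, ?p2_pr; cbn [Nat.eqb Nat.pred].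

Ltac back_tac := intros H; apply f_inv in H; unf; splitall; prinj; simpl; auto; try congruence.

Lemma pre_card u : preimage_card fN u (betaN u).
Proof.
  destruct (node_cases u) as [[e ->]|[[e ->]|[[e [k ->]]|[[e [k ->]]|[[e [n [k ->]]]|J]]]]].
  - replace (betaN (yN e)) with (length [yN e; xN e]) by (bcomp; reflexivity).
    apply pc_intro.
    + constructor. intros [H|[]]. unf. prinj. constructor. intros []. constructor.
    + intros a. split.
      * intros [<-|[<-|[]]]. apply f_y. apply f_x.
      * back_tac.
  - replace (betaN (xN e)) with (length [aN e 0; bN e 0]) by (bcomp; reflexivity).
    apply pc_intro.
    + constructor. intros [H|[]]. unf. prinj. constructor. intros []. constructor.
    + intros a. split.
      * intros [<-|[<-|[]]]. apply f_a0. apply f_b0.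
      * back_tac.
  - destruct (chkN e k) eqn:E.
    + replace (betaN (aN e k)) with (length [aN e (S k); cN e k 0]) by (bcomp; rewrite E; reflexivity).
      apply pc_intro.
      * constructor. intros [H|[]]. unf. prinj. constructor. intros []. constructor.
      * intros a. split.
        -- intros [<-|[<-|[]]]. apply f_aS. rewrite f_c0, E. reflexivity.
        -- back_tac.
    + replace (betaN (aN e k)) with (length [aN e (S k)]) by (bcomp; rewrite E; reflexivity).
      apply pc_intro.
      * constructor. intros []. constructor.
      * intros a. split.
        -- intros [<-|[]]. apply f_aS.
        -- back_tac.
  - replace (betaN (bN e k)) with (length [bN e (S k)]) by (bcomp; reflexivity).
    apply pc_intro.
    + constructor. intros []. constructor.
    + intros a. split.
      * intros [<-|[]]. apply f_bS.
      * back_tac.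
  - destruct k as [|k].
    + destruct (chkN e n) eqn:E.
      * replace (betaN (cN e n 0)) with (length [cN e n 1]) by (bcomp; rewrite E; reflexivity).
        apply pc_intro.
        -- constructor. intros []. constructor.
        -- intros a. split.
           ++ intros [<-|[]]. apply f_cS.
           ++ back_tac.
      * replace (betaN (cN e n 0)) with (length [cN e n 1; cN e n 0]) by (bcomp; rewrite E; reflexivity).
        apply pc_intro.
        -- constructor. intros [H|[]]. unf. prinj. constructor. intros []. constructor.
        -- intros a. split.
           ++ intros [<-|[<-|[]]]. apply f_cS. rewrite f_c0, E. reflexivity.
           ++ back_tac.
    + replace (betaN (cN e n (S k))) with (length [cN e n (S (S k))]) by (bcomp; reflexivity).
      apply pc_intro.
      * constructor. intros []. constructor.
      * intros a. split.
        -- intros [<-|[]]. apply f_cS.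
        -- back_tac.
  - replace (betaN u) with (length [u]).
    2:{ unfold betaN. destruct (p1 u) as [|[|[|[|[|t]]]]]; try lia. reflexivity. }
    apply pc_intro.
    + constructor. intros []. constructor.
    + intros a. split.
      * intros [<-|[]]. apply f_junk; auto.
      * intros H. apply f_inv in H. unf; splitall; prinj; simpl; auto; try congruence.
Qed.

Lemma beta_12 u : betaN u = 1 \/ betaN u = 2.
Proof. unfold betaN. destruct (p1 u =? 0); auto. destruct (p1 u =? 1); auto.
  destruct (p1 u =? 2). destruct (chkN _ _); auto. destruct (p1 u =? 3); auto.
  destruct (p1 u =? 4); auto. destruct (_ =? 0); auto. destruct (chkN _ _); auto. Qed.

Lemma f_inv_b a e k : fN a = bN e k -> a = bN e (S k).
Proof. intros H. apply f_inv in H. unf; splitall; prinj; try congruence; auto. Qed.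
Lemma f_inv_a a e k : fN a = aN e k -> a = aN e (S k) \/ (a = cN e k 0 /\ chkN e k = true).
Proof. intros H. apply f_inv in H. unf; splitall; prinj; try congruence; auto. Qed.

Lemma iter_a e k : Nat.iter k fN (aN e k) = aN e 0.
Proof. induction k; auto. rewrite Nat.iter_succ_r, f_aS. auto. Qed.
Lemma iter_b e k : Nat.iter k fN (bN e k) = bN e 0.
Proof. induction k; auto. rewrite Nat.iter_succ_r, f_bS. auto. Qed.

Lemma tvB e a : tree_vertex fN (bN e 0) a <-> exists k, a = bN e k.
Proof. split.
  - intros [n Hn]. assert (G : forall n a k, Nat.iter n fN a = bN e k -> exists k', a = bN e k').
    { clear. induction n; intros a k H. simpl in H. eauto.
      rewrite Nat.iter_succ_r in H. apply IHn in H as [k' Hk']. apply f_inv_b in Hk'. eauto. }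
    eapply G; eauto.
  - intros [k ->]. exists k. apply iter_b. Qed.
Lemma tvA e a : (forall n, chkN e n = false) -> tree_vertex fN (aN e 0) a <-> exists k, a = aN e k.
Proof. intros Hc. split.
  - intros [n Hn]. assert (G : forall n a k, Nat.iter n fN a = aN e k -> exists k', a = aN e k').
    { clear - Hc. induction n; intros a k H. simpl in H. eauto.
      rewrite Nat.iter_succ_r in H. apply IHn in H as [k' Hk']. apply f_inv_a in Hk' as [H|[_ H]]. eauto.
      rewrite Hc in H. discriminate. }
    eapply G; eauto.
  - intros [k ->]. exists k. apply iter_a. Qed.

Definition gmap u := bN (p1 (p2 u)) (p2 (p2 u)).
Lemma gmap_a e k : gmap (aN e k) = bN e k.
Proof. unfold gmap, aN. rewrite !p2_pr, p1_pr. reflexivity. Qed.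

Lemma iso_case e : (forall n, chkN e n = false) -> tree_iso fN (aN e 0) (bN e 0).
Proof.
  intros Hc. exists gmap. split; [|split; [|split]].
  - intros a Ha. apply tvA in Ha as [k ->]; auto. rewrite gmap_a. apply tvB. eauto.
  - intros a b Ha Hb. apply tvA in Ha as [k ->]; auto. apply tvA in Hb as [k' ->]; auto.
    rewrite !gmap_a. intros H. unf. prinj; reflexivity.
  - intros b Hb. apply tvB in Hb as [k ->]. exists (aN e k). split; [apply tvA; eauto| apply gmap_a].
  - intros a b Ha Hb. pose proof Ha as Ha'. pose proof Hb as Hb'.
    apply tvA in Ha as [k ->]; auto. apply tvA in Hb as [k' ->]; auto. rewrite !gmap_a.
    unfold tree_edge. split.
    + intros [_ [_ H]]. split; [apply tvB; eauto|split; [apply tvB; eauto|]].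
      destruct k. rewrite f_a0 in H. unf. prinj. rewrite f_aS in H. rewrite f_bS. unf. prinj; reflexivity.
    + intros [_ [_ H]]. split; auto. split; auto.
      destruct k. rewrite f_b0 in H. unf. prinj. rewrite f_bS in H. rewrite f_aS. unf. prinj; reflexivity.
Qed.

Lemma noniso_case e n0 : chkN e n0 = true -> ~ tree_iso fN (aN e 0) (bN e 0).
Proof.
  intros Hc [g [G1 [G2 [G3 G4]]]].
  assert (Vu : tree_vertex fN (aN e 0) (aN e n0)) by (exists n0; apply iter_a).
  assert (V1 : tree_vertex fN (aN e 0) (aN e (S n0))) by (exists (S n0); apply iter_a).
  assert (V2 : tree_vertex fN (aN e 0) (cN e n0 0)).
  { exists (S n0). rewrite Nat.iter_succ_r, f_c0, Hc. apply iter_a. }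
  assert (E1 : tree_edge fN (aN e 0) (aN e (S n0)) (aN e n0)) by (split; [|split]; auto; rewrite f_aS; auto).
  assert (E2 : tree_edge fN (aN e 0) (cN e n0 0) (aN e n0)) by (split; [|split]; auto; rewrite f_c0, Hc; auto).
  apply G4 in E1; auto. apply G4 in E2; auto.
  destruct E1 as [W1 [_ F1]]. destruct E2 as [W2 [_ F2]].
  apply tvB in W1 as [k1 K1]. apply tvB in W2 as [k2 K2].
  assert (k1 = k2).
  { rewrite K1 in F1. rewrite K2 in F2. rewrite F1 in F2.
    destruct k1, k2; rewrite ?f_b0, ?f_bS in F2; unf; prinj; auto. }
  subst. rewrite <- K2 in K1. apply G2 in K1; auto. unf. prinj.
Qed.

Lemma x_lambda e : in_Lambda fN (xN e).
Proof. unfold in_Lambda. pose proof (pre_card (xN e)). unfold betaN, xN in H. rewrite p1_pr in H. exact H. Qed.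

Lemma iso_value_1 e : (forall n, chkN e n = false) -> iso_value fN (xN e) 1.
Proof. intros Hc. exists (aN e 0), (bN e 0). split; [unf; intros H; prinj|].
  split; [apply f_a0|]. split; [apply f_b0|]. left. split; auto. apply iso_case; auto. Qed.
Lemma iso_value_0 e n0 : chkN e n0 = true -> iso_value fN (xN e) 0.
Proof. intros Hc. exists (aN e 0), (bN e 0). split; [unf; intros H; prinj|].
  split; [apply f_a0|]. split; [apply f_b0|]. right. split; auto. eapply noniso_case; eauto. Qed.

Theorem proposition3p2 :
  exists f : nat -> nat,
    is_21_structure f /\
    computable f /\
    (exists beta : nat -> nat, computable beta /\
       forall x, preimage_card f x (beta x)) /\
    ~ (exists c : prf, forall x v, in_Lambda f x -> iso_value f x v -> eval c [x] v).
Proof.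
  exists fN. split; [|split; [|split]].
  - intros x. destruct (beta_12 x) as [H|H]; rewrite <- H; [left|right]; apply pre_card.
  - exists fP. intros x. rewrite <- den_f. apply den_ok. exact wf_f.
  - exists betaN. split; [|apply pre_card].
    exists betaP. intros x. rewrite <- den_beta. apply den_ok. exact wf_beta.
  - intros [c Hc]. set (e := encP c).
    destruct (classic (exists n, chkN e n = true)) as [[n Hn]|Hno].
    + pose proof (Hc _ _ (x_lambda e) (iso_value_0 e n Hn)) as H0.
      destruct (encl_surj n) as [Ls <-]. unfold chkN in Hn. apply andb_true_iff in Hn as [V M].
      change (consN (xN e) 0) with (encl [xN e]) in M. rewrite memN_iff in M.
      apply (sound Ls V) in M. pose proof (eval_det _ _ _ M _ H0). discriminate.
    + pose proof (Hc _ _ (x_lambda e) (iso_value_1 e ltac:(intros n; destruct (chkN e n) eqn:E; auto; exfalso; eauto))) as H1.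
      apply complete in H1 as [Ls [V M]]. apply Hno. exists (encl Ls). unfold chkN.
      apply andb_true_iff. split; [exact V|]. change (consN (xN e) 0) with (encl [xN e]). rewrite memN_iff. exact M.
Qed.
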